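(* Let $T$ be a finite group and $G=T\wr\mathfrak{S}_\infty$. Let $V,W$ be finite-dimensional complex Hilbert spaces, let $\pi$ be a unitary representation of $T$ on $W\otimes V$, and let $R\in End(V\otimes V)$ be an involutive $R$-matrix. Then $(\pi,R)$ is a Yang-Baxter couple if and only if $R$ satisfies the Yang-Baxter equation and $(\pi,R)$ satisfies the extended reflection equation $$\forall t,t'\in T,\qquad R_1\pi(t)R_1\pi(t')=\pi(t')R_1\pi(t)R_1 .$$
   Context: $\mathfrak{S}_\infty$ is the group of finitary permutations of $\mathbb{N}=\{1,2,\dots\}$, generated by $\sigma_i=(i\ i{+}1)$, $i\ge1$. $G=T\wr\mathfrak{S}_\infty=\left(\bigcup_n T^n\right)\rtimes\mathfrak{S}_\infty$, where $\bigcup_nT^n$ is the group of sequences $d=(t_i)_{i\ge1}$ in $T$ with $t_i=e_T$ for all but finitely many $i$ (coordinatewise product), and $\mathfrak{S}_\infty$ acts by permuting coordinates. Elements are written $g=(d,\sigma)$. An involutive $R$-matrix is $R\in End(V\otimes V)$ with $R^2=1\otimes1$ and $(R\otimes1)(1\otimes R)(R\otimes1)=(1\otimes R)(R\otimes1)(1\otimes R)$ in $End(V^{\otimes3})$. Consider the algebra $End(W)\otimes End(V)^{\otimes\infty}$ acting on $W\otimes V\otimes V\otimes\cdots$; $R_i$ denotes $R$ acting on the $i$-th and $(i{+}1)$-th copies of $V$ (identity elsewhere, including on $W$), so $R_1=1\otimes R$; $\pi(s)$ denotes $\pi(s)$ acting on $W\otimes$(first copy of $V$), tensored with the identity on the other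 factors. For $g=(d,\sigma)\in G$ put $\rho_{\pi,R}(g):=\rho_{\pi,R}((d,\mathrm{id}))\,\rho_{\pi,R}((1,\sigma))$, where $\rho_{\pi,R}((1,\sigma))$ is the Yang-Baxter representation of $\mathfrak{S}_\infty$ determined by $\sigma_i\mapsto R_i$, and for $d=(t_i)_i$, $$\rho_{\pi,R}((d,\mathrm{id})):=\pi(t_1)\,\big(R_1\pi(t_2)R_1\big)\cdots\big(R_{n-1}\cdots R_1\pi(t_n)R_1\cdots R_{n-1}\big)\cdots.$$ $(\pi,R)$ is called a Yang-Baxter couple if $g\mapsto\rho_{\pi,R}(g)$ defines a group representation of $G$ on $W\otimes V^{\otimes\infty}$. *)

(* Defs.v *)
From HB Require Import structures.
From mathcomp Require Import all_boot all_order all_algebra fingroup perm algC.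
Set Implicit Arguments. Unset Strict Implicit. Unset Printing Implicit Defensive.
Import Order.TTheory GRing.Theory Num.Theory.
Local Open Scope ring_scope.

(* Operators on the Hilbert space C^I (standard inner product), I a finite
   index type (an orthonormal basis); represented as square matrices. *)
Definition Op (I : finType) := 'M[algC]_#|I|.
Definition ent (I : finType) (A : Op I) (x y : I) : algC :=
  A (enum_rank x) (enum_rank y).
Definition mkOp (I : finType) (f : I -> I -> algC) : Op I :=
  \matrix_(i, j) f (enum_val i) (enum_val j).
Definition adj (I : finType) (A : Op I) : Op I := map_mx Num.conj (A^T).

Section YB.
Variables (m n : nat) (gT : finGroupType).
(* W = C^m, V = C^n. *)
Variable pi : gT -> Op ('I_m * 'I_n)%type.
Variable R : Op ('I_n * 'I_n)%type.

Definition unitary_rep := (pi 1%g = 1%:M) /\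
  (forall s t : gT, pi (s * t)%g = pi s *m pi t) /\
  (forall t : gT, pi t *m adj (pi t) = 1%:M).

Definition Rinvolutive := R *m R = 1%:M.

Definition R12 : Op ('I_n * 'I_n * 'I_n)%type :=
  mkOp (fun x y => ent R (x.1.1, x.1.2) (y.1.1, y.1.2) * (x.2 == y.2)%:R).
Definition R23 : Op ('I_n * 'I_n * 'I_n)%type :=
  mkOp (fun x y => (x.1.1 == y.1.1)%:R * ent R (x.1.2, x.2) (y.1.2, y.2)).
Definition YBE := R12 *m R23 *m R12 = R23 *m R12 *m R23.

(* Truncation: W (x) V^{(x) N.+1}; copies of V are indexed 0..N (0-based). *)
Definition idx (N : nat) := ('I_m * {ffun 'I_N.+1 -> 'I_n})%type.

(* R_{k+1} of the paper (0-based: acts on copies k and k+1), for k < N;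
   identity otherwise (never used). *)
Definition Ri (N k : nat) : Op (idx N) :=
  @mkOp (idx N) (fun x y =>
    if (k < N)%N then
      (x.1 == y.1)%:R
      * ent R (x.2 (inord k), x.2 (inord k.+1)) (y.2 (inord k), y.2 (inord k.+1))
      * [forall j : 'I_N.+1, ((j != inord k) && (j != inord k.+1)) ==> (x.2 j == y.2 j)]%:R
    else (x == y)%:R).

Definition Pi (N : nat) (t : gT) : Op (idx N) :=
  @mkOp (idx N) (fun x y => ent (pi t) (x.1, x.2 ord0) (y.1, y.2 ord0)
      * [forall j : 'I_N.+1, (j != ord0) ==> (x.2 j == y.2 j)]%:R).

(* term k t = R_{k} ... R_1 pi(t) R_1 ... R_{k}  (paper's indices) *)
Fixpoint term (N k : nat) (t : gT) : Op (idx N) :=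
  match k with
  | 0 => Pi N t
  | k'.+1 => Ri N k' *m term N k' t *m Ri N k'
  end.

(* The element G_N = T^{N+1} x| S_{N+1} of T wr S_infty (supported in the
   first N+1 coordinates). *)
Definition GN (N : nat) := ({ffun 'I_N.+1 -> gT} * {perm 'I_N.+1})%type.

(* (d, s)(d', s') = (d . s(d'), s o s'), with (s(d'))_i = d'_{s^-1 i}.
   Note: in MathComp, (s' * s) x = s (s' x), so s' * s is s o s'. *)
Definition mulG (N : nat) (g h : GN N) : GN N :=
  ([ffun i => (g.1 i * h.1 (g.2^-1%g i))%g], (h.2 * g.2)%g).

Definition unitG (N : nat) : GN N := ([ffun => 1%g], 1%g).

Definition rhoD (N : nat) (d : {ffun 'I_N.+1 -> gT}) : Op (idx N) :=
  \big[mulmx/1%:M]_(k < N.+1) term N k (d k).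

(* sigma_{k+1} = (k, k+1) in 0-based positions *)
Definition sgen (N k : nat) : {perm 'I_N.+1} := tperm (inord k) (inord k.+1).

(* Yang-Baxter couple: at each truncation level, the prescribed map
   (d, s) |-> rho((d,id)) rho((1,s)), with rho((1,.)) the representation of
   the symmetric group sending sigma_k to R_k, is a group representation. *)
Definition YBcouple : Prop :=
  forall N : nat, exists rho : GN N -> Op (idx N),
    [/\ rho (unitG N) = 1%:M,
        forall g h, rho (mulG g h) = rho g *m rho h,
        forall k, (k < N)%N -> rho ([ffun => 1%g], sgen N k) = Ri N k
      & forall d, rho (d, 1%g) = rhoD d].

Definition ERE : Prop := forall t t' : gT,
  Ri 1 0 *m Pi 1 t *m Ri 1 0 *m Pi 1 t' = Pi 1 t' *m Ri 1 0 *m Pi 1 t *m Ri 1 0.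

End YB.

(* Main.v *)
Require Import Defs.
From HB Require Import structures.
From mathcomp Require Import all_boot all_order all_algebra fingroup perm algC.
From mathcomp Require Import ring zify.
Set Implicit Arguments. Unset Strict Implicit. Unset Printing Implicit Defensive.
Set Warnings "-notation-overridden,-ambiguous-paths,-redundant-canonical-projection".
Import Order.TTheory GRing.Theory Num.Theory.
Local Open Scope ring_scope.

HB.instance Definition _ (d : nat) := Monoid.isLaw.Build 'M[algC]_d 1%:M (@mulmx _ d d d) (@mulmxA _ d d d d) (@mul1mx _ d d) (@mulmx1 _ d d).

Section OpGen.
Variable I : finType.

Lemma entE (f : I -> I -> algC) x y : ent (mkOp f) x y = f x y.
Proof. by rewrite /ent /mkOp mxE !enum_rankK. Qed.

Lemma opP (A B : Op I) : (forall x y, ent A x y = ent B x y) -> A = B.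
Proof.
move=> H; apply/matrixP => i j.
by move: (H (enum_val i) (enum_val j)); rewrite /ent !enum_valK.
Qed.

Lemma ent1 x y : ent (1%:M : Op I) x y = (x == y)%:R.
Proof. by rewrite /ent mxE (inj_eq enum_rank_inj). Qed.

Lemma entM (A B : Op I) x y : ent (A *m B) x y = \sum_z ent A x z * ent B z y.
Proof.
rewrite /ent mxE (reindex (@enum_rank I)) //.
by exists enum_val => z _; rewrite ?enum_rankK ?enum_valK.
Qed.

Lemma sum_delta (F : I -> algC) a : \sum_z (a == z)%:R * F z = F a.
Proof.
rewrite (bigD1 a) //= eqxx mul1r big1 ?addr0 // => z /negbTE.
by rewrite eq_sym => ->; rewrite mul0r.
Qed.

Lemma sum_delta' (F : I -> algC) a : \sum_z F z * (z == a)%:R = F a.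
Proof.
rewrite -(sum_delta F a); apply: eq_bigr => z _; by rewrite mulrC eq_sym.
Qed.

End OpGen.

Lemma natb_and (a b : bool) : a%:R * b%:R = (a && b)%:R :> algC.
Proof. by case: a; case: b; rewrite ?mul1r ?mul0r. Qed.

Section Loc.
Variables (I J K : finType) (p : I -> J) (q : I -> K) (upd : I -> J -> I).
Hypothesis H1 : forall x j, p (upd x j) = j.
Hypothesis H2 : forall x j, q (upd x j) = q x.
Hypothesis H3 : forall z z', q z = q z' -> p z = p z' -> z = z'.

Definition loc (A : Op J) : Op I :=
  mkOp (fun x y => ent A (p x) (p y) * (q x == q y)%:R).

Lemma loc_sum x (G : J -> algC) :
  \sum_z (q z == q x)%:R * G (p z) = \sum_j G j.
Proof.
have E z : (q z == q x)%:R = \sum_j (z == upd x j)%:R :> algC.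
  rewrite (eq_bigr (fun j => (p z == j)%:R * (q z == q x)%:R)).
    by rewrite (sum_delta (fun _ => (q z == q x)%:R)).
  move=> j _; rewrite natb_and; congr (_%:R); congr nat_of_bool.
  apply/idP/idP => [/eqP ->|/andP [/eqP <- /eqP Hq]]; first by rewrite H1 H2 !eqxx.
  by apply/eqP; apply: H3; rewrite ?H1 ?H2.
under eq_bigr do rewrite E big_distrl /=.
rewrite exchange_big /=; apply: eq_bigr => j _.
rewrite (bigD1 (upd x j)) //= eqxx mul1r H1 big1 ?addr0 // => z /negbTE ->.
by rewrite mul0r.
Qed.

Lemma locM (A B : Op J) : loc A *m loc B = loc (A *m B).
Proof.
apply: opP => x y; rewrite entM !entE entM.
transitivity (\sum_z (q z == q x)%:R * (ent A (p x) (p z) * ent B (p z) (p y) * (q x == q y)%:R)).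
  apply: eq_bigr => z _; rewrite !entE.
  case: (eqVneq (q z) (q x)) => [->|ne]; first by rewrite !mul1r mulr1 !mulrA.
  by rewrite !mulr0 !mul0r.
by rewrite (loc_sum x (fun j => ent A (p x) j * ent B j (p y) * (q x == q y)%:R)) -big_distrl.
Qed.

Lemma loc1 : loc 1%:M = 1%:M.
Proof.
apply: opP => x y; rewrite entE !ent1 natb_and; congr (_%:R); congr nat_of_bool.
apply/andP/eqP => [[/eqP a /eqP b]|->]; last by rewrite !eqxx.
by apply: H3.
Qed.

End Loc.

Lemma sum_pair (J1 J2 : finType) (G : (J1 * J2)%type -> algC) :
  \sum_c G c = \sum_c1 \sum_c2 G (c1, c2).
Proof. by rewrite pair_bigA; apply: eq_bigr => -[]. Qed.

Section Tens.
Variables (J1 J2 : finType).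
Definition ltens (A : Op J1) : Op (J1 * J2)%type :=
  mkOp (fun a b => ent A a.1 b.1 * (a.2 == b.2)%:R).
Definition rtens (B : Op J2) : Op (J1 * J2)%type :=
  mkOp (fun a b => (a.1 == b.1)%:R * ent B a.2 b.2).
Lemma tensC A B : ltens A *m rtens B = rtens B *m ltens A.
Proof.
apply: opP => a b; rewrite !entM.
rewrite !sum_pair /=.
transitivity (ent A a.1 b.1 * ent B a.2 b.2).
  rewrite (eq_bigr (fun c1 => ent A a.1 c1 * (c1 == b.1)%:R * ent B a.2 b.2)).
    by rewrite -big_distrl /= sum_delta'.
  move=> c1 _; under eq_bigr do rewrite !entE /=.
  rewrite (eq_bigr (fun c2 => (a.2 == c2)%:R * (ent A a.1 c1 * (c1 == b.1)%:R * ent B c2 b.2))).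
    by rewrite sum_delta.
  by move=> c2 _; ring.
rewrite (eq_bigr (fun c1 => (a.1 == c1)%:R * (ent A c1 b.1 * ent B a.2 b.2))).
  by rewrite sum_delta.
move=> c1 _; under eq_bigr do rewrite !entE /=.
rewrite (eq_bigr (fun c2 => ent B a.2 c2 * (c2 == b.2)%:R * ((a.1 == c1)%:R * ent A c1 b.1))).
  by rewrite -big_distrl /= sum_delta'; ring.
by move=> c2 _; ring.
Qed.
End Tens.

Section PermFacts.
Variable N : nat.
Local Notation sg := (sgen N).
Local Notation P := {perm 'I_N.+1}.

Lemma inordK' (k : nat) : (k <= N)%N -> nat_of_ord (inord k : 'I_N.+1) = k.
Proof. by move=> h; rewrite inordK. Qed.

Lemma inord_eq (j k : nat) : (j <= N)%N -> (k <= N)%N ->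
  ((inord j : 'I_N.+1) == inord k) = (j == k).
Proof.
move=> hj hk; apply/eqP/eqP => [h|->] //.
by rewrite -(inordK' hj) -(inordK' hk) h.
Qed.

Lemma sgV k : (sg k * sg k = 1)%g.
Proof. by rewrite /sgen tperm2. Qed.

Lemma sgE k (i : 'I_N.+1) : (k < N)%N ->
  sg k i = if i == inord k then inord k.+1 else if i == inord k.+1 then inord k else i.
Proof. by move=> hk; rewrite /sgen permE /=. Qed.

Lemma sum2 (F : 'I_N.+1 -> nat) a b : a != b ->
  (\sum_i F i = F a + F b + \sum_(i | (i != a) && (i != b)) F i)%N.
Proof.
move=> ab; rewrite (bigD1 a) //= (bigD1 b) /=; last by rewrite eq_sym.
rewrite addnA; congr (_ + _)%N; apply: eq_bigl => i; by rewrite andbC.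
Qed.

Definition descn (s : P) (k : nat) := (k < N)%N && (s (inord k.+1) < s (inord k))%N.

Definition Ms (s : P) := (\sum_(i : 'I_N.+1) i * s i)%N.

Lemma Ms_bound s : (Ms s <= N.+1 ^ 3)%N.
Proof.
rewrite /Ms; apply: leq_trans (_ : \sum_(i : 'I_N.+1) N.+1 * N.+1 <= _)%N.
  apply: leq_sum => i _; apply: leq_mul; exact: ltnW.
by rewrite sum_nat_const card_ord /= expnS mulnA.
Qed.

Lemma Ms_desc s k : descn s k -> (Ms s < Ms (sg k * s))%N.
Proof.
case/andP => hk hd.
have hk1 : (k <= N)%N by apply: ltnW.
rewrite /Ms [X in (_ < X)%N](reindex_inj (@perm_inj _ (sg k))) /=.
have E : forall i : 'I_N.+1, (sg k * s)%g (sg k i) = s i.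
  by move=> i; rewrite permM /sgen tpermK.
under [X in (_ < X)%N]eq_bigr do rewrite E.
have ne : (inord k : 'I_N.+1) != inord k.+1 by rewrite inord_eq //; lia.
rewrite (sum2 _ ne) [X in (_ < X)%N](sum2 _ ne).
set S1 := (\sum_(i | _) _)%N; set S2 := (\sum_(i | _) _)%N.
have -> : S2 = S1.
  rewrite /S1 /S2; apply: eq_bigr => i /andP [h1 h2]; rewrite sgE // (negbTE h1).
  by rewrite (negbTE h2).
rewrite !sgE // eqxx eq_sym (negbTE ne) eqxx !inordK //; try lia.
Qed.

Lemma desc_sg_neq s k : (k < N)%N -> ~~ descn s k -> descn (sg k * s) k.
Proof.
move=> hk; rewrite /descn hk /= -leqNgt => h.
have ne : (inord k : 'I_N.+1) != inord k.+1 by rewrite inord_eq //; lia.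
rewrite !permM !sgE // eqxx eq_sym (negbTE ne) eqxx.
rewrite ltn_neqAle h andbT.
apply/negP => /eqP /val_inj /perm_inj /eqP; rewrite inord_eq //; lia.
Qed.

Lemma noDesc_id s : (forall k, (k < N)%N -> ~~ descn s k) -> s = 1%g.
Proof.
move=> H.
have inc : forall i : nat, (i < N)%N -> (s (inord i) < s (inord i.+1))%N.
  move=> i hi; move: (H i hi); rewrite /descn hi /= -leqNgt leq_eqVlt => /orP [/eqP e|//].
  have := e => /val_inj /perm_inj /eqP; rewrite inord_eq //; lia.
have ge : forall i : nat, (i <= N)%N -> (i <= s (inord i))%N.
  elim=> [|i IH] hi //.
  by apply: leq_ltn_trans (IH (ltnW hi)) (inc i hi).
have sumE : (\sum_(i : 'I_N.+1) s i = \sum_(i : 'I_N.+1) i)%N.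
  by rewrite (reindex_inj (@perm_inj _ s^-1)) /=; apply: eq_bigr => i _; rewrite permKV.
apply/permP => i; rewrite perm1; apply/val_inj => /=.
have ge' : forall j : 'I_N.+1, (j <= s j)%N.
  by move=> j; have := ge j (ltnSE (ltn_ord j)); rewrite inord_val.
have : (\sum_(j : 'I_N.+1) (s j - j) = 0)%N.
  rewrite (@sumnB _ _ xpredT (fun j : 'I_N.+1 => nat_of_ord j) (fun j => nat_of_ord (s j))) //.
  by rewrite sumE subnn.
move/eqP; rewrite sum_nat_eq0 => /forallP /(_ i) /implyP /(_ isT).
by rewrite subn_eq0 => h; apply/eqP; rewrite eqn_leq h ge'.
Qed.

Lemma descP s : {k : 'I_N | descn s k} + {s = 1%g}.
Proof.
case: (pickP (fun k : 'I_N => descn s k)) => [k hk|h]; first by left; exists k.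
right; apply: noDesc_id => k hk; by have := h (Ordinal hk); rewrite /= => ->.
Qed.

Lemma sg_sg s k : (sg k * (sg k * s))%g = s.
Proof. by rewrite mulgA sgV mul1g. Qed.

Lemma perm_ind (Pr : P -> Prop) : Pr 1%g ->
  (forall s k, (k < N)%N -> Pr s -> Pr (sg k * s)%g) -> forall s, Pr s.
Proof.
move=> h1 hS.
suff H : forall n s, (N.+1 ^ 3 - Ms s < n)%N -> Pr s.
  by move=> s; apply: (H (N.+1 ^ 3 - Ms s).+1).
elim=> [//|n IH] s hn.
case: (descP s) => [[k hk]|->] //.
rewrite -(sg_sg s k); apply: hS; first by case/andP: hk.
apply: IH; have := Ms_desc hk; have := Ms_bound (sg k * s); lia.
Qed.

Lemma desc_lt s k : (k < N)%N -> descn s k -> (N.+1 ^ 3 - Ms (sg k * s) < N.+1 ^ 3 - Ms s)%N.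
Proof. move=> _ hk; have := Ms_desc hk; have := Ms_bound (sg k * s); lia. Qed.

Definition swapn (k x : nat) := if x == k then k.+1 else if x == k.+1 then k else x.

Lemma swap_spec k x : [\/ x = k /\ swapn k x = k.+1, x = k.+1 /\ swapn k x = k |
  [/\ x <> k, x <> k.+1 & swapn k x = x]].
Proof.
rewrite /swapn; case: eqP => [->|h1]; first by constructor 1.
case: eqP => [->|h2]; first by constructor 2.
by constructor 3.
Qed.

Lemma sg_val k (i : 'I_N.+1) : (k < N)%N -> nat_of_ord (sg k i) = swapn k i.
Proof.
move=> hk; rewrite sgE // /swapn.
have e1 : (i == inord k) = (nat_of_ord i == k) by rewrite -(inj_eq val_inj) /= inordK //; lia.
have e2 : (i == inord k.+1) = (nat_of_ord i == k.+1) by rewrite -(inj_eq val_inj) /= inordK //; lia.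
rewrite e1 e2; case: ifP => _; first by rewrite inordK //; lia.
case: ifP => _ //; by rewrite inordK //; lia.
Qed.

Ltac dsp := let h := fresh in move=> h; case: h => [[? ?]|[? ?]|[? ? ?]].

Lemma sg_comm a b : (a < N)%N -> (b < N)%N -> (a.+1 < b)%N -> (sg a * sg b = sg b * sg a)%g.
Proof.
move=> ha hb hab; apply/permP => i; apply/ord_inj; rewrite !permM.
rewrite !sg_val //; move: (nat_of_ord i) => x.
move: (swap_spec a x) (swap_spec b x) (swap_spec b (swapn a x)) (swap_spec a (swapn b x)).
set u := swapn a x; set v := swapn b x; set w := swapn b u; set z := swapn a v.
dsp; dsp; dsp; dsp; lia.
Qed.

Lemma sg_braid a : (a.+1 < N)%N -> (sg a * (sg a.+1 * sg a) = sg a.+1 * (sg a * sg a.+1))%g.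
Proof.
move=> ha; apply/permP => i; apply/ord_inj; rewrite !permM.
rewrite !sg_val //; try lia; move: (nat_of_ord i) => x.
move: (swap_spec a x) (swap_spec a.+1 (swapn a x)) (swap_spec a (swapn a.+1 (swapn a x))).
move: (swap_spec a.+1 x) (swap_spec a (swapn a.+1 x)) (swap_spec a.+1 (swapn a (swapn a.+1 x))).
set u1 := swapn a x; set u2 := swapn a.+1 u1; set u3 := swapn a u2.
set v1 := swapn a.+1 x; set v2 := swapn a v1; set v3 := swapn a.+1 v2.
dsp; dsp; dsp; dsp; dsp; dsp; lia.
Qed.

Lemma val_inord' (j : nat) : (j <= N)%N -> nat_of_ord (inord j : 'I_N.+1) = j.
Proof. by move=> h; rewrite inordK. Qed.

Lemma descn_val s k : descn s k = (k < N)%N && (s (inord k.+1) < s (inord k))%N.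
Proof. by []. Qed.

Lemma sgM_inord s a j : (a < N)%N -> (j <= N)%N ->
  (sg a * s)%g (inord j) = s (inord (swapn a j)).
Proof.
move=> ha hj; rewrite permM; congr (s _); apply/ord_inj.
rewrite sg_val // !inordK //; rewrite /swapn; case: eqP => ?; try lia; case: eqP => ?; lia.
Qed.

Lemma swapnL k : swapn k k = k.+1. Proof. by rewrite /swapn eqxx. Qed.
Lemma swapnR k : swapn k k.+1 = k. Proof. by rewrite /swapn eqxx; case: eqP => //; lia. Qed.
Lemma swapn_id k x : x <> k -> x <> k.+1 -> swapn k x = x.
Proof. by rewrite /swapn => h1 h2; do 2!case: eqP => //. Qed.

Lemma desc_far s a b : descn s a -> descn s b -> (a.+1 < b \/ b.+1 < a)%N -> descn (sg a * s) b.
Proof.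
move=> /andP [ha _] /andP [hb hd] hab; rewrite /descn hb /=.
rewrite !sgM_inord //; try lia.
by rewrite !(@swapn_id a) //; lia.
Qed.

Lemma desc_b1 s a : descn s a -> descn s a.+1 -> descn (sg a * s) a.+1.
Proof.
move=> /andP [ha h1] /andP [hb h2]; rewrite /descn hb /=.
rewrite !sgM_inord //; try lia.
rewrite (swapnR a) (@swapn_id a a.+2); lia.
Qed.

Lemma desc_b2 s a : descn s a -> descn s a.+1 -> descn (sg a.+1 * (sg a * s)) a.
Proof.
move=> /andP [ha h1] /andP [hb h2]; rewrite /descn ha /=.
rewrite !sgM_inord ?(swapnL a.+1) ?(@swapn_id a.+1 a) ?(@swapn_id a a.+2) ?(swapnL a); lia.
Qed.

Lemma desc_b3 s a : descn s a -> descn s a.+1 -> descn (sg a.+1 * s) a.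
Proof.
move=> /andP [ha h1] /andP [hb h2]; rewrite /descn ha /=.
rewrite !sgM_inord ?(swapnL a.+1) ?(@swapn_id a.+1 a); lia.
Qed.

Lemma desc_b4 s a : descn s a -> descn s a.+1 -> descn (sg a * (sg a.+1 * s)) a.+1.
Proof.
move=> /andP [ha h1] /andP [hb h2]; rewrite /descn hb /=.
rewrite !sgM_inord ?(swapnR a) ?(@swapn_id a a.+2) ?(swapnR a.+1) ?(swapnL a.+1) ?(@swapn_id a.+1 a); lia.
Qed.

Lemma desc1 k : ~~ descn 1%g k.
Proof. rewrite /descn !perm1; apply/negP => /andP [h1 h2]; move: h2; rewrite !inordK; lia. Qed.

End PermFacts.

Section Cox.
Variables (d N : nat) (r : nat -> 'M[algC]_d).
Hypothesis rinv : forall k, (k < N)%N -> r k *m r k = 1%:M.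
Hypothesis rbraid : forall k, (k.+1 < N)%N -> r k *m r k.+1 *m r k = r k.+1 *m r k *m r k.+1.
Hypothesis rcomm : forall j k, (j.+1 < k)%N -> (k < N)%N -> r j *m r k = r k *m r j.
Local Notation sg := (sgen N).
Local Notation P := {perm 'I_N.+1}.
Local Notation K s := (N.+1 ^ 3 - Ms s)%N.

Fixpoint fphi (n : nat) (s : P) : 'M[algC]_d :=
  match n with
  | 0 => 1%:M
  | n'.+1 => match descP s with
             | inleft (exist k _) => fphi n' (sg k * s) *m r k
             | inright _ => 1%:M end
  end.

Lemma fphi_stable n1 n2 s : (K s < n1)%N -> (K s < n2)%N -> fphi n1 s = fphi n2 s.
Proof.
elim: n1 n2 s => [|n1 IH] [|n2] s //= h1 h2.
case: (descP s) => [[k hk]|_] //; congr (_ *m _); apply: IH.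
  have := desc_lt (ltn_ord k) hk; lia.
have := desc_lt (ltn_ord k) hk; lia.
Qed.

Definition phi s := fphi (N.+1 ^ 3).+1 s.

Lemma phi_def s : phi s = match descP s with
  | inleft (exist k _) => phi (sg k * s) *m r k
  | inright _ => 1%:M end.
Proof.
rewrite {1}/phi.
have -> : fphi (N.+1 ^ 3).+1 s = match descP s with
  | inleft (exist k _) => fphi (N.+1 ^ 3) (sg k * s) *m r k
  | inright _ => 1%:M end by [].
case: (descP s) => [[k hk]|_] //; congr (_ *m _).
apply: fphi_stable; have := desc_lt (ltn_ord k) hk; have := Ms_bound (sg k * s); lia.
Qed.

Lemma phi1 : phi 1%g = 1%:M.
Proof.
rewrite phi_def; case: (descP 1%g) => [[k hk]|_] //.
by have := desc1 N k; rewrite hk.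
Qed.

Lemma phiQ_aux n : forall s, (K s < n)%N ->
  forall k, descn s k -> phi s = phi (sg k * s) *m r k.
Proof.
elim: n => [//|n IH] s hn.
have C : forall a b, descn s a -> descn s b -> phi (sg a * s) *m r a = phi (sg b * s) *m r b.
  have gen : forall a b, (a <= b)%N -> descn s a -> descn s b -> phi (sg a * s) *m r a = phi (sg b * s) *m r b.
    move=> a b hab ha hb.
    have ha' := ha; have hb' := hb; case/andP: ha' => haN _; case/andP: hb' => hbN _.
    have Ka := desc_lt haN ha; have Kb := desc_lt hbN hb.
    case: (ltngtP a b) hab => // [hlt _|-> //].
    case: (eqVneq b a.+1) => [eb|nb].
      subst b.
      have d1 := desc_b1 ha hb; have d2 := desc_b2 ha hb.
      have d3 := desc_b3 ha hb; have d4 := desc_b4 ha hb.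
      have Ka2 := desc_lt hbN d1; have Kb2 := desc_lt haN d3.
      rewrite (IH (sg a * s)%g ltac:(lia) a.+1 d1).
      rewrite (IH (sg a.+1 * (sg a * s))%g ltac:(lia) a d2).
      rewrite (IH (sg a.+1 * s)%g ltac:(lia) a d3).
      rewrite (IH (sg a * (sg a.+1 * s))%g ltac:(lia) a.+1 d4).
      have -> : (sg a * (sg a.+1 * (sg a * s)) = sg a.+1 * (sg a * (sg a.+1 * s)))%g.
        by rewrite !mulgA; congr (_ * s)%g; rewrite -!mulgA sg_braid.
      rewrite -!mulmxA.
      by congr (_ *m _); rewrite !mulmxA rbraid.
    have far : (a.+1 < b)%N by lia.
    have d1 := desc_far ha hb (or_introl far).
    have d2 := desc_far hb ha (or_intror far).
    rewrite (IH (sg a * s)%g ltac:(lia) b d1).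
    rewrite (IH (sg b * s)%g ltac:(lia) a d2).
    have -> : (sg a * (sg b * s) = sg b * (sg a * s))%g.
      by rewrite !mulgA sg_comm.
    rewrite -!mulmxA; congr (_ *m _).
    by rewrite (rcomm far hbN).
  move=> a b ha hb; case: (leqP a b) => hab; first exact: gen.
  by symmetry; apply: gen => //; apply: ltnW.
move=> k hk.
rewrite phi_def; case: (descP s) => [[k0 hk0]|e].
  exact: C.
by subst s; have := desc1 N k; rewrite hk.
Qed.

Lemma phiQ s k : descn s k -> phi s = phi (sg k * s) *m r k.
Proof. exact: (@phiQ_aux (K s).+1). Qed.

Lemma phiR s k : (k < N)%N -> phi (sg k * s) = phi s *m r k.
Proof.
move=> hk; case hd: (descn s k).
  by rewrite (phiQ hd) -mulmxA rinv // mulmx1.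
have := desc_sg_neq hk (negbT hd) => /phiQ ->.
by rewrite sg_sg.
Qed.

Lemma phiM t s : phi (t * s) = phi s *m phi t.
Proof.
elim/(@perm_ind N): t => [|t k hk IH]; first by rewrite mul1g phi1 mulmx1.
by rewrite -mulgA !phiR // IH mulmxA.
Qed.

Lemma phi_sg k : (k < N)%N -> phi (sg k) = r k.
Proof. by move=> hk; rewrite -(mulg1 (sg k)) phiR // phi1 mul1mx. Qed.

End Cox.

Section Terms.
Variables (d N : nat) (gT : finGroupType) (r : nat -> 'M[algC]_d) (Pm : gT -> 'M[algC]_d).
Hypothesis rinv : forall k, (k < N)%N -> r k *m r k = 1%:M.
Hypothesis rbraid : forall k, (k.+1 < N)%N -> r k *m r k.+1 *m r k = r k.+1 *m r k *m r k.+1.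
Hypothesis rcomm : forall j k, (j.+1 < k)%N -> (k < N)%N -> r j *m r k = r k *m r j.
Hypothesis P1 : Pm 1%g = 1%:M.
Hypothesis PM : forall s t, Pm (s * t)%g = Pm s *m Pm t.
Hypothesis Pr : forall t k, (0 < k)%N -> (k < N)%N -> Pm t *m r k = r k *m Pm t.
Hypothesis PE : (0 < N)%N -> forall t t',
  r 0 *m Pm t *m r 0 *m Pm t' = Pm t' *m r 0 *m Pm t *m r 0.

Fixpoint tm (k : nat) (t : gT) : 'M[algC]_d :=
  match k with 0 => Pm t | k'.+1 => r k' *m tm k' t *m r k' end.

Lemma tm1 k : (k <= N)%N -> tm k 1%g = 1%:M.
Proof.
elim: k => [|k IH] hk /=; first exact: P1.
by rewrite IH ?mulmx1 ?rinv //; lia.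
Qed.

Lemma tmM k s t : (k <= N)%N -> tm k (s * t)%g = tm k s *m tm k t.
Proof.
elim: k => [|k IH] hk /=; first exact: PM.
rewrite IH; last by lia.
by rewrite !mulmxA -[_ *m r k *m r k]mulmxA rinv ?mulmx1 //; lia.
Qed.

Definition cm (X Y : 'M[algC]_d) := X *m Y = Y *m X.
Lemma cmM X A B : cm X A -> cm X B -> cm X (A *m B).
Proof. by rewrite /cm => ha hb; rewrite mulmxA ha -mulmxA hb mulmxA. Qed.
Lemma cmS X Y : cm X Y -> cm Y X.
Proof. by rewrite /cm. Qed.

Lemma L1 j k t : (j < k)%N -> (k < N)%N -> cm (r k) (tm j t).
Proof.
elim: j => [|j IH] hjk hk /=; first by symmetry; apply: Pr; lia.
have c : cm (r k) (r j) by symmetry; apply: rcomm; lia.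
by apply: cmM; [apply: cmM|] => //; apply: IH; lia.
Qed.

Lemma L2 k j t : (k.+2 <= j)%N -> (j <= N)%N -> cm (r k) (tm j t).
Proof.
elim: j => [//|j IH] hkj hj.
case: (eqVneq j k.+1) => [e|ne].
  subst j => /=; rewrite /cm.
  have c1 : r k.+1 *m tm k t = tm k t *m r k.+1 by apply: L1; lia.
  have br := rbraid (k := k) ltac:(lia).
  rewrite !mulmxA br -(mulmxA (r k.+1 *m r k) (r k.+1) (tm k t)) c1 mulmxA.
  by rewrite -!mulmxA; do 3 congr (_ *m _); rewrite !mulmxA br.
have c : cm (r k) (r j) by apply: rcomm; lia.
by apply: cmM; [apply: cmM|] => //; apply: IH; lia.
Qed.

Lemma S1 k t : (k < N)%N -> r k *m tm k.+1 t *m r k = tm k t.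
Proof.
move=> hk /=; rewrite !mulmxA rinv // mul1mx -mulmxA rinv // mulmx1 //.
Qed.

Lemma C0 k t t' : (0 < k)%N -> (k <= N)%N -> cm (Pm t) (tm k t').
Proof.
elim: k => [//|k IH] _ hk.
case: k IH hk => [|k] IH hk /=.
  by rewrite /cm !mulmxA PE //; lia.
have c : cm (Pm t) (r k.+1) by apply: Pr; lia.
by apply: cmM; [apply: cmM|] => //; apply: IH; lia.
Qed.

Lemma C j k t t' : (j < k)%N -> (k <= N)%N -> cm (tm j t) (tm k t').
Proof.
elim: j k => [|j IH] k hjk hk /=; first by apply: C0; lia.
apply: cmS.
have c : cm (r j) (tm k t') by apply: L2; lia.
have c' := cmS c.
by apply: cmM; [apply: cmM|] => //; apply: cmS; apply: IH; lia.
Qed.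

Lemma cm_big n (B : nat -> 'M[algC]_d) X :
  (forall j, (j < n)%N -> cm (B j) X) -> cm (\big[mulmx/1%:M]_(0 <= j < n) B j) X.
Proof.
elim: n => [|n IH] h; first by rewrite big_geq // /cm mul1mx mulmx1.
rewrite big_nat_recr //=; apply: cmS; apply: cmM; apply: cmS.
  by apply: IH => j hj; apply: h; lia.
by apply: h.
Qed.

Lemma big_split_comm n (A B : nat -> 'M[algC]_d) :
  (forall j k, (j < k)%N -> (k < n)%N -> cm (B j) (A k)) ->
  \big[mulmx/1%:M]_(0 <= k < n) (A k *m B k) =
  (\big[mulmx/1%:M]_(0 <= k < n) A k) *m (\big[mulmx/1%:M]_(0 <= k < n) B k).
Proof.
elim: n => [|n IH] h; first by rewrite !big_geq // mulmx1.
rewrite !big_nat_recr //= IH; last by move=> j k hj hk; apply: h; lia.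
have c : cm (\big[mulmx/1%:M]_(0 <= j < n) B j) (A n).
  by apply: cm_big => j hj; apply: h.
by rewrite !mulmxA -[_ *m _ *m A n]mulmxA c !mulmxA.
Qed.

Lemma conj_big n (X : 'M[algC]_d) (F : nat -> 'M[algC]_d) : X *m X = 1%:M ->
  X *m \big[mulmx/1%:M]_(0 <= k < n) F k = \big[mulmx/1%:M]_(0 <= k < n) (X *m F k *m X) *m X.
Proof.
move=> hX; elim: n => [|n IH]; first by rewrite !big_geq // mul1mx mulmx1.
rewrite !big_nat_recr //= mulmxA IH.
by rewrite -!mulmxA; congr (_ *m _); rewrite hX mulmx1.
Qed.

Lemma conj_fix X Y : X *m X = 1%:M -> cm X Y -> X *m Y *m X = Y.
Proof. by move=> h c; rewrite c -mulmxA h mulmx1. Qed.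

Definition rD (f : nat -> gT) := \big[mulmx/1%:M]_(0 <= k < N.+1) tm k (f k).

Lemma rD_mul f g : rD (fun k => f k * g k)%g = rD f *m rD g.
Proof.
rewrite /rD -big_split_comm; last by move=> j k hj hk; apply: C; lia.
by apply: eq_big_nat => k hk; rewrite tmM //; lia.
Qed.

Lemma rD1 : rD (fun _ => 1%g) = 1%:M.
Proof.
rewrite /rD big1_seq // => k; rewrite mem_index_iota => hk; apply: tm1; lia.
Qed.

Lemma rD_swap k f : (k < N)%N -> r k *m rD f = rD (fun i => f (swapn k i)) *m r k.
Proof.
move=> hk; rewrite /rD conj_big ?rinv //; congr (_ *m _).
rewrite (big_cat_nat (n := k)) //=; last by lia.
rewrite [X in _ = X](big_cat_nat (n := k)) //=; last by lia.
congr (_ *m _).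
  apply: eq_big_nat => i hi; rewrite swapn_id; try lia.
  by apply: conj_fix; [apply: rinv|apply: L1]; lia.
have h1 : (k < N.+1)%N by lia.
have h2 : (k.+1 < N.+1)%N by lia.
rewrite !(big_ltn h1) !(big_ltn h2).
have M : (r k *m tm k (f k) *m r k) *m (r k *m tm k.+1 (f k.+1) *m r k) =
    tm k (f (swapn k k)) *m tm k.+1 (f (swapn k k.+1)).
  rewrite swapnL swapnR S1 //.
  change (r k *m tm k (f k) *m r k) with (tm k.+1 (f k)).
  by symmetry; apply: C; lia.
rewrite [X in X = _]mulmxA [X in _ = X]mulmxA M.
congr (_ *m _); apply: eq_big_nat => i hi; rewrite swapn_id; try lia.
by apply: conj_fix; [apply: rinv|apply: L2]; lia.
Qed.

End Terms.

Section Inst.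
Variables (m n N : nat).
Local Notation I := (idx m n N).
Local Notation F := {ffun 'I_N.+1 -> 'I_n}.

Definition upd1 (f : F) a v : F := [ffun i => if i == a then v else f i].
Definition mask (S : pred 'I_N.+1) (f : F) : {ffun 'I_N.+1 -> option 'I_n} :=
  [ffun i => if S i then None else Some (f i)].

Lemma upd1E f a v i : upd1 f a v i = if i == a then v else f i.
Proof. by rewrite ffunE. Qed.

Lemma mask_eq S f g : (mask S f == mask S g) = [forall i, ~~ S i ==> (f i == g i)].
Proof.
apply/eqP/forallP => [h i|h]; last first.
  apply/ffunP => i; rewrite !ffunE; case: ifP => // hs.
  by have := h i; rewrite hs /= => /eqP ->.
apply/implyP => hs; move/ffunP: h => /(_ i); rewrite !ffunE (negbTE hs).
by case=> ->.
Qed.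

Lemma mask_eqP S f g : mask S f = mask S g -> forall i, ~~ S i -> f i = g i.
Proof. by move/eqP; rewrite mask_eq => /forallP h i hs; apply/eqP; move/implyP: (h i); apply. Qed.

Lemma mask_upd1 (S : pred 'I_N.+1) f a v : S a -> mask S (upd1 f a v) = mask S f.
Proof.
move=> ha; apply/ffunP => i; rewrite !ffunE; case: ifP => // hs.
by case: eqP => // e; rewrite e ha in hs.
Qed.

Lemma idx_ext (x y : I) : x.1 = y.1 -> (forall i, x.2 i = y.2 i) -> x = y.
Proof. by case: x y => [x1 x2] [y1 y2] /= -> h; congr pair; apply/ffunP. Qed.

Section InstA.
Variables (a b : 'I_N.+1).
Hypothesis ab : a != b.
Definition pA (x : I) := (x.2 a, x.2 b).
Definition qA (x : I) := (x.1, mask (pred2 a b) x.2).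
Definition uA (x : I) (j : 'I_n * 'I_n) : I := (x.1, upd1 (upd1 x.2 a j.1) b j.2).

Lemma A1 x j : pA (uA x j) = j.
Proof. by case: j => j1 j2; rewrite /pA /uA /= !upd1E eqxx (negbTE ab) eqxx. Qed.
Lemma A2 x j : qA (uA x j) = qA x.
Proof. by rewrite /qA /uA /= !mask_upd1 //= eqxx ?orbT. Qed.
Lemma A3 z z' : qA z = qA z' -> pA z = pA z' -> z = z'.
Proof.
rewrite /qA /pA => -[e1 e2] [e3 e4]; apply: idx_ext => // i.
case: (eqVneq i a) => [->//|na]; case: (eqVneq i b) => [->//|nb].
by apply: (mask_eqP e2); rewrite /= negb_or na nb.
Qed.

Definition locA := loc pA qA.
Lemma locAM A B : locA A *m locA B = locA (A *m B).
Proof. exact: (locM A1 A2 A3). Qed.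
Lemma locA1 : locA 1%:M = 1%:M.
Proof. exact: (loc1 A3). Qed.
End InstA.

Lemma forall_split (S : pred 'I_N.+1) c (P : pred 'I_N.+1) : ~~ S c ->
  [forall j, ~~ S j ==> P j] = P c && [forall j, ~~ (S j || (j == c)) ==> P j].
Proof.
move=> hc; apply/forallP/andP => [h|[hpc /forallP h] j].
  split; first by move/implyP: (h c); apply.
  by apply/forallP => j; apply/implyP; rewrite negb_or => /andP [hj _]; move/implyP: (h j); apply.
apply/implyP => hj; case: (eqVneq j c) => [->//|nc].
by move/implyP: (h j); apply; rewrite negb_or hj nc.
Qed.

Section InstB.
Variables (a b c : 'I_N.+1).
Hypotheses (ab : a != b) (ac : a != c) (bc : b != c).
Definition pB (x : I) := (x.2 a, x.2 b, x.2 c).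
Definition qB (x : I) := (x.1, mask (pred3 a b c) x.2).
Definition uB (x : I) (j : 'I_n * 'I_n * 'I_n) : I :=
  (x.1, upd1 (upd1 (upd1 x.2 a j.1.1) b j.1.2) c j.2).
Lemma B1 x j : pB (uB x j) = j.
Proof.
case: j => [[j1 j2] j3]; rewrite /pB /uB /= !upd1E.
have ba : b != a by rewrite eq_sym. have ca : c != a by rewrite eq_sym. have cb : c != b by rewrite eq_sym.
by rewrite ?eqxx ?(negbTE ab) ?(negbTE ac) ?(negbTE bc) ?(negbTE ba) ?(negbTE ca) ?(negbTE cb).
Qed.
Lemma B2 x j : qB (uB x j) = qB x.
Proof. by rewrite /qB /uB /= !mask_upd1 //= eqxx ?orbT. Qed.
Lemma B3 z z' : qB z = qB z' -> pB z = pB z' -> z = z'.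
Proof.
rewrite /qB /pB => -[e1 e2] [e3 e4 e5]; apply: idx_ext => // i.
case: (eqVneq i a) => [->//|na]; case: (eqVneq i b) => [->//|nb].
case: (eqVneq i c) => [->//|nc].
by apply: (mask_eqP e2); rewrite /= !negb_or na nb nc.
Qed.
Definition locB := loc pB qB.
Lemma locBM A B : locB A *m locB B = locB (A *m B).
Proof. exact: (locM B1 B2 B3). Qed.
End InstB.

Section InstC.
Variables (a b c e : 'I_N.+1).
Hypotheses (ab : a != b) (ac : a != c) (ae : a != e) (bc : b != c) (be : b != e) (ce : c != e).
Definition pC (x : I) := ((x.2 a, x.2 b), (x.2 c, x.2 e)).
Definition qC (x : I) := (x.1, mask (pred4 a b c e) x.2).
Definition uC (x : I) (j : ('I_n * 'I_n) * ('I_n * 'I_n)) : I :=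
  (x.1, upd1 (upd1 (upd1 (upd1 x.2 a j.1.1) b j.1.2) c j.2.1) e j.2.2).
Lemma C1 x j : pC (uC x j) = j.
Proof.
case: j => [[j1 j2] [j3 j4]]; rewrite /pC /uC /= !upd1E.
have ba : b != a by rewrite eq_sym. have ca : c != a by rewrite eq_sym. have cb : c != b by rewrite eq_sym.
have ea : e != a by rewrite eq_sym. have eb : e != b by rewrite eq_sym. have ec : e != c by rewrite eq_sym.
by rewrite ?eqxx ?(negbTE ab) ?(negbTE ac) ?(negbTE bc) ?(negbTE ba) ?(negbTE ca) ?(negbTE cb) ?(negbTE ae) ?(negbTE be) ?(negbTE ce) ?(negbTE ea) ?(negbTE eb) ?(negbTE ec).
Qed.
Lemma C2 x j : qC (uC x j) = qC x.
Proof. by rewrite /qC /uC /= !mask_upd1 //= eqxx ?orbT. Qed.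
Lemma C3 z z' : qC z = qC z' -> pC z = pC z' -> z = z'.
Proof.
rewrite /qC /pC => -[e1 e2] [e3 e4 e5 e6]; apply: idx_ext => // i.
case: (eqVneq i a) => [->//|na]; case: (eqVneq i b) => [->//|nb].
case: (eqVneq i c) => [->//|nc]; case: (eqVneq i e) => [->//|ne].
by apply: (mask_eqP e2); rewrite /= !negb_or na nb nc ne.
Qed.
Definition locC := loc pC qC.
Lemma locCM A B : locC A *m locC B = locC (A *m B).
Proof. exact: (locM C1 C2 C3). Qed.
End InstC.

Section InstD.
Variables (c e : 'I_N.+1).
Hypotheses (ac : ord0 != c) (ae : ord0 != e) (ce : c != e).
Definition pD (x : I) := ((x.1, x.2 ord0), (x.2 c, x.2 e)).
Definition qD (x : I) := mask (pred3 ord0 c e) x.2.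
Definition uD (x : I) (j : ('I_m * 'I_n) * ('I_n * 'I_n)) : I :=
  (j.1.1, upd1 (upd1 (upd1 x.2 ord0 j.1.2) c j.2.1) e j.2.2).
Lemma D1 x j : pD (uD x j) = j.
Proof.
case: j => [[j1 j2] [j3 j4]]; rewrite /pD /uD /= !upd1E.
have ca : c != ord0 by rewrite eq_sym. have ea : e != ord0 by rewrite eq_sym. have ec : e != c by rewrite eq_sym.
by rewrite ?eqxx ?(negbTE ac) ?(negbTE ae) ?(negbTE ce) ?(negbTE ca) ?(negbTE ea) ?(negbTE ec).
Qed.
Lemma D2 x j : qD (uD x j) = qD x.
Proof. by rewrite /qD /uD /= !mask_upd1 //= eqxx ?orbT. Qed.
Lemma D3 z z' : qD z = qD z' -> pD z = pD z' -> z = z'.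
Proof.
rewrite /qD /pD => e2 [e1 e3 e4 e5]; apply: idx_ext => // i.
case: (eqVneq i ord0) => [->//|na]; case: (eqVneq i c) => [->//|nc].
case: (eqVneq i e) => [->//|ne].
by apply: (mask_eqP e2); rewrite /= !negb_or na nc ne.
Qed.
Definition locD := loc pD qD.
Lemma locDM A B : locD A *m locD B = locD (A *m B).
Proof. exact: (locM D1 D2 D3). Qed.
End InstD.

Definition pE (x : I) := (x.1, x.2 ord0).
Definition qE (x : I) := mask (pred1 ord0) x.2.
Definition uE (x : I) (j : 'I_m * 'I_n) : I := (j.1, upd1 x.2 ord0 j.2).
Lemma E1 x j : pE (uE x j) = j.
Proof. by case: j => j1 j2; rewrite /pE /uE /= !upd1E !eqxx. Qed.
Lemma E2 x j : qE (uE x j) = qE x.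
Proof. by rewrite /qE /uE /= !mask_upd1 //=. Qed.
Lemma E3 z z' : qE z = qE z' -> pE z = pE z' -> z = z'.
Proof.
rewrite /qE /pE => e2 [e1 e3]; apply: idx_ext => // i.
case: (eqVneq i ord0) => [->//|na].
by apply: (mask_eqP e2); rewrite /= na.
Qed.
Definition locE := loc pE qE.
Lemma locEM A B : locE A *m locE B = locE (A *m B).
Proof. exact: (locM E1 E2 E3). Qed.
Lemma locE1 : locE 1%:M = 1%:M.
Proof. exact: (loc1 E3). Qed.

Lemma inord_neq (j k : nat) : (j <= N)%N -> (k <= N)%N -> j <> k -> (inord j : 'I_N.+1) != inord k.
Proof. move=> hj hk hjk; rewrite inord_eq //; lia. Qed.

Lemma RiA (R : Op ('I_n * 'I_n)%type) k (hk : (k < N)%N) :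
  Ri m R N k = locA (inord k) (inord k.+1) R.
Proof.
apply: opP => x y; rewrite !entE hk /pA /qA xpair_eqE mask_eq.
rewrite -natb_and.
have -> : [forall i, ~~ pred2 (inord k) (inord k.+1) i ==> (x.2 i == y.2 i)] =
  [forall j, ((j != inord k) && (j != inord k.+1)) ==> (x.2 j == y.2 j)].
  by apply: eq_forallb => i; rewrite /= negb_or.
ring.
Qed.

Lemma forall_split' (S1 S2 : pred 'I_N.+1) c (P : pred 'I_N.+1) : ~~ S1 c ->
  (forall j, S2 j = S1 j || (j == c)) ->
  [forall j, ~~ S1 j ==> P j] = P c && [forall j, ~~ S2 j ==> P j].
Proof.
move=> hc hS; rewrite (forall_split _ hc); congr (_ && _).
by apply: eq_forallb => j; rewrite hS.
Qed.

Lemma Ri_forall (a b : 'I_N.+1) (P : pred 'I_N.+1) :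
  [forall j, ((j != a) && (j != b)) ==> P j] = [forall j, ~~ pred2 a b j ==> P j].
Proof. by apply: eq_forallb => j; rewrite /= negb_or. Qed.

Variable (R : Op ('I_n * 'I_n)%type).

Ltac side := first [ by rewrite /= !inord_eq //; lia | by move=> ? /=; do ?case: (_ == _) ].

Lemma RiB12 k (hk : (k.+1 < N)%N) :
  Ri m R N k = locB (inord k) (inord k.+1) (inord k.+2) (R12 R).
Proof.
have hk' : (k < N)%N by lia.
apply: opP => x y; rewrite !entE hk' /pB /qB /R12 ?entE /= xpair_eqE mask_eq Ri_forall.
rewrite (@forall_split' (pred2 (inord k) (inord k.+1)) (pred3 (inord k) (inord k.+1) (inord k.+2)) (inord k.+2)); try side.
rewrite -!natb_and; ring.
Qed.

Lemma RiB23 k (hk : (k.+1 < N)%N) :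
  Ri m R N k.+1 = locB (inord k) (inord k.+1) (inord k.+2) (R23 R).
Proof.
apply: opP => x y; rewrite !entE hk /pB /qB /R23 ?entE /= xpair_eqE mask_eq Ri_forall.
rewrite (@forall_split' (pred2 (inord k.+1) (inord k.+2)) (pred3 (inord k) (inord k.+1) (inord k.+2)) (inord k)); try side.
rewrite -!natb_and; ring.
Qed.

Lemma RiCl j k (hjk : (j.+1 < k)%N) (hk : (k < N)%N) :
  Ri m R N j = locC (inord j) (inord j.+1) (inord k) (inord k.+1) (ltens _ R).
Proof.
have hj : (j < N)%N by lia.
apply: opP => x y; rewrite !entE hj /pC /qC /ltens ?entE /= !xpair_eqE mask_eq Ri_forall.
rewrite (@forall_split' (pred2 (inord j) (inord j.+1)) [pred i | pred3 (inord j) (inord j.+1) (inord k) i] (inord k)); try side.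
rewrite (@forall_split' [pred i | pred3 (inord j) (inord j.+1) (inord k) i] (pred4 (inord j) (inord j.+1) (inord k) (inord k.+1)) (inord k.+1)); try side.
rewrite -!natb_and; ring.
Qed.

Lemma RiCr j k (hjk : (j.+1 < k)%N) (hk : (k < N)%N) :
  Ri m R N k = locC (inord j) (inord j.+1) (inord k) (inord k.+1) (rtens _ R).
Proof.
apply: opP => x y; rewrite !entE hk /pC /qC /rtens ?entE /= !xpair_eqE mask_eq Ri_forall.
rewrite (@forall_split' (pred2 (inord k) (inord k.+1)) [pred i | pred3 (inord j) (inord k) (inord k.+1) i] (inord j)); try side.
rewrite (@forall_split' [pred i | pred3 (inord j) (inord k) (inord k.+1) i] (pred4 (inord j) (inord j.+1) (inord k) (inord k.+1)) (inord j.+1)); try side.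
rewrite -!natb_and; ring.
Qed.

Lemma ord0_inord k : (k <= N)%N -> ((ord0 : 'I_N.+1) == inord k) = (0 == k)%N.
Proof. by move=> hk; rewrite -(inj_eq val_inj) /= inordK. Qed.
Lemma inord_ord0 k : (k <= N)%N -> ((inord k : 'I_N.+1) == ord0) = (k == 0)%N.
Proof. by move=> hk; rewrite -(inj_eq val_inj) /= inordK. Qed.

Ltac side2 := first [ by rewrite /= ?ord0_inord ?inord_ord0 ?inord_eq //; lia | by move=> ? /=; do ?case: (_ == _) ].

Variable (gT : finGroupType) (pi : gT -> Op ('I_m * 'I_n)%type).

Lemma PiE t : Pi pi N t = locE (pi t).
Proof.
apply: opP => x y; rewrite !entE /pE /qE /= mask_eq.
congr (_ * _%:R); congr nat_of_bool; by apply: eq_forallb.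
Qed.

Lemma PiD k t (hk0 : (0 < k)%N) (hk : (k < N)%N) :
  Pi pi N t = locD (inord k) (inord k.+1) (ltens _ (pi t)).
Proof.
apply: opP => x y; rewrite !entE /pD /qD /ltens ?entE /= !xpair_eqE mask_eq.
rewrite (@forall_split' (pred1 ord0) [pred i | pred2 ord0 (inord k) i] (inord k)); try side2.
rewrite (@forall_split' [pred i | pred2 ord0 (inord k) i] (pred3 ord0 (inord k) (inord k.+1)) (inord k.+1)); try side2.
rewrite -!natb_and; ring.
Qed.

Lemma RiD k (hk0 : (0 < k)%N) (hk : (k < N)%N) :
  Ri m R N k = locD (inord k) (inord k.+1) (rtens _ R).
Proof.
apply: opP => x y; rewrite !entE hk /pD /qD /rtens ?entE /= !xpair_eqE mask_eq Ri_forall.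
rewrite (@forall_split' (pred2 (inord k) (inord k.+1)) (pred3 ord0 (inord k) (inord k.+1)) ord0); try side2.
rewrite -!natb_and; ring.
Qed.

Section InstF.
Hypothesis hN : (0 < N)%N.
Definition pF (x : I) : idx m n 1 := (x.1, [ffun i : 'I_2 => x.2 (inord i)]).
Definition qF (x : I) := mask (pred2 ord0 (inord 1)) x.2.
Definition uF (x : I) (j : idx m n 1) : I :=
  (j.1, upd1 (upd1 x.2 ord0 (j.2 ord0)) (inord 1) (j.2 (inord 1))).

Lemma inord0' : (inord 0 : 'I_N.+1) = ord0.
Proof. by apply: val_inj; rewrite /= inordK. Qed.
Lemma o01 : (ord0 : 'I_N.+1) != inord 1.
Proof. by rewrite ord0_inord //. Qed.

Lemma F1 x j : pF (uF x j) = j.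
Proof.
case: j => j1 j2; rewrite /pF /uF /=; congr pair; apply/ffunP => i; rewrite !ffunE.
case: i => [[|[|i']] hi] //.
  by rewrite /= inord0' (negbTE o01) eqxx; congr (j2 _); apply: val_inj.
rewrite /= eqxx; congr (j2 _); apply: val_inj; by rewrite /= inordK.
Qed.
Lemma F2 x j : qF (uF x j) = qF x.
Proof. by rewrite /qF /uF /= !mask_upd1 //= eqxx ?orbT. Qed.
Lemma F3 z z' : qF z = qF z' -> pF z = pF z' -> z = z'.
Proof.
rewrite /qF /pF => e2 [e1 /ffunP e3]; apply: idx_ext => // i.
case: (eqVneq i ord0) => [->|na].
  by have := e3 ord0; rewrite !ffunE inord0'.
case: (eqVneq i (inord 1)) => [->|nb].
  by have := e3 (inord 1); rewrite !ffunE inordK.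
by apply: (mask_eqP e2); rewrite /= !negb_or na nb.
Qed.
Definition locF := loc pF qF.
Lemma locFM A B : locF A *m locF B = locF (A *m B).
Proof. exact: (locM F1 F2 F3). Qed.

Lemma forall_I2 (P : pred 'I_2) : [forall j : 'I_2, (j != ord0) ==> P j] = P (inord 1).
Proof.
apply/forallP/idP => [h|h [[|[|i']] hi]] //.
  by move/implyP: (h (inord 1)); apply; rewrite -(inj_eq val_inj) /= inordK.
by rewrite (_ : Ordinal hi = inord 1) ?h ?implybT //; apply: val_inj; rewrite /= inordK.
Qed.

Lemma PiF t : Pi pi N t = locF (Pi pi 1 t).
Proof.
apply: opP => x y; rewrite !entE /pF /qF /= mask_eq !ffunE inord0'.
rewrite (@forall_split' (pred1 ord0) (pred2 ord0 (inord 1)) (inord 1)) //; last by rewrite /= eq_sym o01.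
rewrite forall_I2 !ffunE inordK // -!natb_and; ring.
Qed.

Lemma RiF : Ri m R N 0 = locF (Ri m R 1 0).
Proof.
apply: opP => x y; rewrite !entE hN /pF /qF /= mask_eq !ffunE Ri_forall.
have e0 : nat_of_ord (inord 0 : 'I_2) = 0%N by rewrite inordK.
have e1 : nat_of_ord (inord 1 : 'I_2) = 1%N by rewrite inordK.
have H2 : forall (P : pred 'I_2), [forall j : 'I_2, ((j != inord 0) && (j != inord 1)) ==> P j] = true.
  move=> P; apply/forallP => -[[|[|i']] hi] //=; apply/implyP.
  - by rewrite (_ : Ordinal hi = inord 0) ?eqxx //; apply: val_inj; rewrite /= inordK.
  - by rewrite (_ : Ordinal hi = inord 1) ?eqxx ?andbF //; apply: val_inj; rewrite /= inordK.
rewrite e0 e1 H2 inord0' mulr1; congr (_ * _%:R); congr nat_of_bool.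
Qed.
End InstF.

End Inst.

Section Final.
Variables (gT : finGroupType) (m n : nat).
Variables (pi : gT -> Op ('I_m * 'I_n)%type) (R : Op ('I_n * 'I_n)%type).
Hypothesis pi1 : pi 1%g = 1%:M.
Hypothesis piM : forall s t : gT, pi (s * t)%g = pi s *m pi t.
Hypothesis Rinv : R *m R = 1%:M.
Hypothesis Ryb : YBE R.

Section Level.
Variable N : nat.

Lemma rinvN k : (k < N)%N -> Ri m R N k *m Ri m R N k = 1%:M.
Proof.
move=> hk; have ab : (inord k : 'I_N.+1) != inord k.+1 by apply: inord_neq; lia.
by rewrite RiA // locAM // Rinv locA1.
Qed.

Lemma rbraidN k : (k.+1 < N)%N ->
  Ri m R N k *m Ri m R N k.+1 *m Ri m R N k = Ri m R N k.+1 *m Ri m R N k *m Ri m R N k.+1.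
Proof.
move=> hk.
have ab : (inord k : 'I_N.+1) != inord k.+1 by apply: inord_neq; lia.
have ac : (inord k : 'I_N.+1) != inord k.+2 by apply: inord_neq; lia.
have bc : (inord k.+1 : 'I_N.+1) != inord k.+2 by apply: inord_neq; lia.
rewrite RiB12 // RiB23 // !locBM //.
by rewrite Ryb.
Qed.

Lemma rcommN j k : (j.+1 < k)%N -> (k < N)%N ->
  Ri m R N j *m Ri m R N k = Ri m R N k *m Ri m R N j.
Proof.
move=> hjk hk.
have h1 : (inord j : 'I_N.+1) != inord j.+1 by apply: inord_neq; lia.
have h2 : (inord j : 'I_N.+1) != inord k by apply: inord_neq; lia.
have h3 : (inord j : 'I_N.+1) != inord k.+1 by apply: inord_neq; lia.
have h4 : (inord j.+1 : 'I_N.+1) != inord k by apply: inord_neq; lia.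
have h5 : (inord j.+1 : 'I_N.+1) != inord k.+1 by apply: inord_neq; lia.
have h6 : (inord k : 'I_N.+1) != inord k.+1 by apply: inord_neq; lia.
rewrite (RiCl m R hjk hk) (RiCr m R hjk hk) !locCM //.
by rewrite tensC.
Qed.

Lemma P1N : Pi pi N 1%g = 1%:M.
Proof. by rewrite PiE pi1 locE1. Qed.

Lemma PMN s t : Pi pi N (s * t)%g = Pi pi N s *m Pi pi N t.
Proof. by rewrite !PiE piM locEM. Qed.

Lemma PrN t k : (0 < k)%N -> (k < N)%N -> Pi pi N t *m Ri m R N k = Ri m R N k *m Pi pi N t.
Proof.
move=> hk0 hk.
have h1 : (ord0 : 'I_N.+1) != inord k by rewrite ord0_inord //; lia.
have h2 : (ord0 : 'I_N.+1) != inord k.+1 by rewrite ord0_inord //; lia.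
have h3 : (inord k : 'I_N.+1) != inord k.+1 by apply: inord_neq; lia.
rewrite (PiD pi t hk0 hk) (RiD m R hk0 hk) !locDM //.
by rewrite tensC.
Qed.

Lemma PEN (ere : ERE pi R) : (0 < N)%N -> forall t t',
  Ri m R N 0 *m Pi pi N t *m Ri m R N 0 *m Pi pi N t' =
  Pi pi N t' *m Ri m R N 0 *m Pi pi N t *m Ri m R N 0.
Proof.
move=> hN t t'; rewrite (RiF m R hN) !(PiF pi hN) !locFM //.
by rewrite ere.
Qed.

Lemma termE k t : term pi R N k t = tm (Ri m R N) (Pi pi N) k t.
Proof. by elim: k => //= k ->. Qed.

Lemma rhoDE (d : {ffun 'I_N.+1 -> gT}) :
  rhoD pi R d = rD N (Ri m R N) (Pi pi N) (fun k => d (inord k)).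
Proof.
rewrite /rhoD /rD big_mkord; apply: eq_bigr => i _; by rewrite termE inord_val.
Qed.

End Level.

Section Construct.
Hypothesis ere : ERE pi R.
Variable N : nat.
Local Notation r := (Ri m R N).
Local Notation Pm := (Pi pi N).

Let h1 := @rinvN N.
Let h2 := @rbraidN N.
Let h3 := @rcommN N.
Let h4 := @PrN N.
Let h5 := @PEN N ere.
Let h6 := @P1N N.
Let h7 := @PMN N.

Lemma swapE k i : (k < N)%N -> (i <= N)%N -> sgen N k (inord i) = inord (swapn k i).
Proof.
move=> hk hi.
have hs : (swapn k i <= N)%N by case: (swap_spec k i) => [[_ ->]|[_ ->]|[_ _ ->]]; lia.
by apply: ord_inj; rewrite sg_val // !inordK.
Qed.

Lemma rhoD_swap k (d : {ffun 'I_N.+1 -> gT}) : (k < N)%N ->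
  r k *m rhoD pi R d = rhoD pi R [ffun i => d (sgen N k i)] *m r k.
Proof.
move=> hk; rewrite !rhoDE (rD_swap h1 h2 h3 h4 h5) //; congr (_ *m _).
rewrite /rD; apply: eq_big_nat => i hi; rewrite ffunE swapE //; lia.
Qed.

Lemma rhoD_mul (a b : {ffun 'I_N.+1 -> gT}) :
  rhoD pi R [ffun i => (a i * b i)%g] = rhoD pi R a *m rhoD pi R b.
Proof.
rewrite !rhoDE -(rD_mul h1 h2 h3 h7 h4 h5).
by rewrite /rD; apply: eq_big_nat => i hi; rewrite ffunE.
Qed.

Lemma rhoD1 : rhoD pi R ([ffun=> 1%g] : {ffun 'I_N.+1 -> gT}) = 1%:M.
Proof.
rewrite rhoDE -(rD1 h1 h6 h5) /rD; apply: eq_big_nat => i hi; by rewrite ffunE.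
Qed.

Lemma equivN s (d : {ffun 'I_N.+1 -> gT}) :
  phi r s *m rhoD pi R d = rhoD pi R [ffun i => d ((s^-1)%g i)] *m phi r s.
Proof.
elim/(@perm_ind N): s d => [|s k hk IH] d.
  rewrite (phi1 N r) mul1mx mulmx1; congr (rhoD pi R _); apply/ffunP => i.
  by rewrite ffunE invg1 perm1.
rewrite (phiR h1 h2 h3) // -mulmxA rhoD_swap // mulmxA IH -mulmxA; congr (_ *m _).
  congr (rhoD pi R _); apply/ffunP => i; rewrite !ffunE invMg permM.
  by rewrite /sgen tpermV.
Qed.

Definition rhoN (g : GN gT N) := rhoD pi R g.1 *m phi r g.2.

Lemma constructN : exists rho : GN gT N -> Op (idx m n N),
    [/\ rho (unitG gT N) = 1%:M,
        forall g h, rho (mulG g h) = rho g *m rho h,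
        forall k, (k < N)%N -> rho ([ffun => 1%g], sgen N k) = r k
      & forall d, rho (d, 1%g) = rhoD pi R d].
Proof.
exists rhoN; split.
- by rewrite /rhoN /unitG /= rhoD1 (phi1 N r) mulmx1.
- move=> [g1 g2] [h1' h2']; rewrite /rhoN /mulG /=.
  have -> : [ffun i => (g1 i * h1' ((g2^-1)%g i))%g] =
      [ffun i => (g1 i * [ffun j => h1' ((g2^-1)%g j)] i)%g] by apply/ffunP => i; rewrite !ffunE.
  rewrite rhoD_mul (phiM h1 h2 h3) !mulmxA; congr (_ *m _).
  by rewrite -!mulmxA equivN.
- by move=> k hk; rewrite /rhoN /= rhoD1 mul1mx (phi_sg h1 h2 h3).
- by move=> d; rewrite /rhoN /= (phi1 N r) mulmx1.
Qed.

End Construct.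

Lemma couple_ERE : YBcouple pi R -> ERE pi R.
Proof.
move=> /(_ 1%N) [rho [r1 rM rs rd]] t t'.
set a : {ffun 'I_2 -> gT} := [ffun i => if i == ord0 then 1%g else t].
set b : {ffun 'I_2 -> gT} := [ffun i => if i == ord0 then t' else 1%g].
have E : mulG (a, 1%g) (b, 1%g) = mulG (b, 1%g) (a, 1%g).
  rewrite /mulG /= invg1; congr pair; apply/ffunP => i; rewrite !ffunE !perm1.
  by case: (i == ord0); rewrite ?mul1g ?mulg1.
have := congr1 rho E; rewrite !rM !rd.
have rD2 : forall d : {ffun 'I_2 -> gT}, rhoD pi R d = Pi pi 1 (d ord0) *m (Ri m R 1 0 *m Pi pi 1 (d ord_max) *m Ri m R 1 0).
  move=> d; rewrite /rhoD big_ord_recr big_ord_recr big_ord0 /=.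
  congr (_ *m _); rewrite (_ : widen_ord (leqnSn 1) ord_max = ord0); last by apply: val_inj.
  exact: mul1mx.
rewrite !rD2 /a /b !ffunE /= P1N mul1mx.
by rewrite !mulmx1 rinvN // !mulmx1 !mulmxA.
Qed.

End Final.

Theorem mainTheorem1 (gT : finGroupType) (m n : nat)
    (pi : gT -> Op ('I_m * 'I_n)%type) (R : Op ('I_n * 'I_n)%type) :
  unitary_rep pi -> Rinvolutive R -> YBE R ->
  (YBcouple pi R <-> (YBE R /\ ERE pi R)).
Proof.
move=> [pi1 [piM _]] Rinv Ryb; split.
  by move=> h; split => //; apply: (couple_ERE pi1 Rinv h).
by move=> [_ ere] N; apply: (constructN pi1 piM Rinv Ryb ere).
Qed.
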